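(* Let $\mathcal V$ be a vector space partition of $\mathbb F_2^8$ such that $\dim(V)$ is even for all $V\in\mathcal V$. Then $\mathcal V$ has one of the types $[8^1]$, $[2^{64},6^1]$, or $[2^{5i},4^{17-i}]$ for some $0\le i\le17$. Moreover, vector space partitions of $\mathbb F_2^8$ of each of these types exist.
   Context: A vector space partition of $\mathbb F_2^n$ is a set of nonzero subspaces such that every nonzero vector lies in exactly one of them. It has type $[d_1^{n_1},\dots,d_k^{n_k}]$ (with $d_1<\dots<d_k$) if it contains exactly $n_i$ subspaces of dimension $d_i$ and no others. *)

(* Defs.v *)
From HB Require Import structures.
From mathcomp Require Import all_boot all_order all_algebra.
Set Implicit Arguments. Unset Strict Implicit. Unset Printing Implicit Defensive.
Import GRing.Theory.
Local Open Scope ring_scope.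

Notation F2n n := 'rV['F_2]_n.

Definition vs_partition (n : nat) (P : seq {vspace F2n n}) : Prop :=
  [/\ uniq P,
      (forall U, U \in P -> U != 0%VS) &
      (forall v : F2n n, v != 0 ->
         (exists2 U, U \in P & v \in U) /\
         (forall U1 U2, U1 \in P -> U2 \in P -> v \in U1 -> v \in U2 -> U1 = U2))].

(* P has type [d_1^{n_1}, ..., d_k^{n_k}] given as list t of pairs (d_i, n_i):
   for each dimension d, the number of members of P of dimension d equals the
   listed multiplicity (0 if d is not listed). *)
Definition has_type (n : nat) (P : seq {vspace F2n n}) (t : seq (nat * nat)) : Prop :=
  forall d : nat, count (fun U => \dim U == d)%N P = (\sum_(p <- t | p.1 == d) p.2)%N.

(* Main.v *)
From Stdlib Require PeanoNat.
Require Import Defs.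
From HB Require Import structures.
From mathcomp Require Import all_boot all_order all_algebra all_field.
Set Implicit Arguments. Unset Strict Implicit. Unset Printing Implicit Defensive.
Import GRing.Theory.
Local Open Scope ring_scope.
Notation testbit := PeanoNat.Nat.testbit.

Fixpoint xr (k a b : nat) : nat :=
  match k with 0 => 0 | S k =>
   PeanoNat.Nat.add (PeanoNat.Nat.mul 2 (xr k (PeanoNat.Nat.div2 a) (PeanoNat.Nat.div2 b))) (PeanoNat.Nat.b2n (xorb (PeanoNat.Nat.odd a) (PeanoNat.Nat.odd b))) end.
Lemma xr_spec k : forall i a b, (i < k)%N -> testbit (xr k a b) i = xorb (testbit a i) (testbit b i).
Proof.
elim: k => [|k IH] i a b Hi //.
rewrite [xr _ _ _]/=; case: i Hi => [|i] Hi.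
  by rewrite PeanoNat.Nat.testbit_0_r.
by rewrite PeanoNat.Nat.testbit_succ_r IH.
Qed.

Definition lxor a b := xr 8 a b.

Lemma F2_cases (k : 'F_2) : k = 0 \/ k = 1.
Proof. case: k => [[|[|k]] Hk]; [left|right|]; try exact/val_inj. by []. Qed.
Lemma F2_11 : (1 + 1 : 'F_2) = 0. Proof. exact/val_inj. Qed.

Definition vec (m : nat) : 'rV['F_2]_8 := \row_(i < 8) ((testbit m i : nat)%:R).

Lemma b2F_inj (b1 b2 : bool) : (b1 : nat)%:R = (b2 : nat)%:R :> 'F_2 -> b1 = b2.
Proof. by case: b1; case: b2 => //= /val_eqP. Qed.

Lemma vecD a b : vec (lxor a b) = vec a + vec b.
Proof.
apply/rowP => i; rewrite !mxE /lxor xr_spec //.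
by case: (testbit a i); case: (testbit b i); rewrite /= ?addr0 ?add0r ?F2_11.
Qed.

Lemma vec0 : vec 0 = 0.
Proof. by apply/rowP => i; rewrite !mxE PeanoNat.Nat.bits_0. Qed.

Lemma bits_decomp_all :
  all (fun a => a == sumn [seq (testbit a i : nat) * 2 ^ i | i <- iota 0 8])%N (iota 0 256).
Proof. by vm_compute. Qed.

Lemma vec_inj a b : (a < 256)%N -> (b < 256)%N -> vec a = vec b -> a = b.
Proof.
move=> Ha Hb E.
have Hi : forall i, (i < 8)%N -> testbit a i = testbit b i.
  move=> i Hi; apply: b2F_inj.
  move/rowP: E => /(_ (Ordinal Hi)).
  rewrite !mxE.
  done.
have H := allP bits_decomp_all.
have Ha' : a \in iota 0 256 by rewrite mem_iota.
have Hb' : b \in iota 0 256 by rewrite mem_iota.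
move: (H a Ha') (H b Hb') => /eqP -> /eqP ->.
congr sumn.
apply/eq_in_map => i; rewrite mem_iota => /andP[_ Hi8].
by rewrite Hi.
Qed.

Lemma vec_surj (v : 'rV['F_2]_8) : exists2 m, (m < 256)%N & v = vec m.
Proof.
pose f (i : 'I_256) := vec i.
have injf : injective f by move=> i j /vec_inj e; apply/val_inj/e.
have := inj_card_onto injf; rewrite card_mx card_Fp // card_ord => /(_ isT v).
by case/codomP => i ->; exists i.
Qed.

Lemma vec_neq0 m : (m < 256)%N -> (vec m == 0) = (m == 0%N).
Proof.
move=> Hm; apply/eqP/eqP => [|->]; last exact: vec0.
by rewrite -vec0 => /vec_inj; apply.
Qed.

Fixpoint spanN (B : seq nat) : seq nat :=
  match B with
  | [::] => [:: 0%N]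
  | b :: B' => spanN B' ++ map (lxor b) (spanN B')
  end.

Definition vspan (B : seq nat) : {vspace 'rV['F_2]_8} := <<map vec B>>%VS.

Lemma mem_vspan B v : (v \in vspan B) = has (fun m => v == vec m) (spanN B).
Proof.
rewrite /vspan; elim: B v => [|b B IH] v /=.
  by rewrite span_nil memv0 vec0 orbF.
rewrite span_cons has_cat has_map.
apply/memv_addP/orP => [[u /vlineP[k ->] [w Hw ->]]|].
  rewrite IH in Hw; case/hasP: Hw => m Hm /eqP ->.
  case: (F2_cases k) => ->; [left|right]; apply/hasP; exists m => //=.
    by rewrite scale0r add0r.
  by rewrite scale1r vecD.
case=> /hasP[m Hm /eqP ->].
  exists 0; first exact: mem0v.
  by exists (vec m); rewrite ?add0r // IH; apply/hasP; exists m.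
exists (vec b); first exact: memv_line.
by exists (vec m); rewrite ?vecD // IH; apply/hasP; exists m.
Qed.

Lemma mem_vspanN B m : all (fun x => x < 256)%N (spanN B) -> (m < 256)%N ->
  (vec m \in vspan B) = (m \in spanN B).
Proof.
move=> /allP HB Hm; rewrite mem_vspan; apply/hasP/idP => [[x Hx /eqP E]|Hm'].
  by rewrite (vec_inj Hm (HB x Hx) E).
by exists m.
Qed.

Fixpoint freeN (B : seq nat) : bool :=
  match B with
  | [::] => true
  | b :: B' => [&& (b < 256)%N, all (fun x => x < 256)%N (spanN B'),
                  b \notin spanN B' & freeN B']
  end.

Lemma freeN_free B : freeN B -> free (map vec B).
Proof.
elim: B => [|b B IH] /=; first by rewrite nil_free.
case/and4P => Hb HS Hn HB; rewrite free_cons IH // andbT.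
by rewrite -/(vspan B) mem_vspanN.
Qed.

Lemma freeN_dim B : freeN B -> \dim (vspan B) = size B.
Proof. by move/freeN_free/eqP; rewrite size_map. Qed.

Definition disjN (B1 B2 : seq nat) :=
  all (fun m => (m == 0%N) || (m \notin spanN B2)) (spanN B1).

Definition goodB (B : seq nat) :=
  [&& freeN B, all (fun m => m < 256)%N (spanN B) & has (fun m => m != 0%N) (spanN B)].

Definition disjS (S1 S2 : seq nat) :=
  all (fun m => (m == 0%N) || (m \notin S2)) S1.

Definition checkS (Ss : seq (seq nat)) :=
  pairwise disjS Ss && all (fun m => has (fun S => m \in S) Ss) (iota 1 255).

Definition checkP (Bs : seq (seq nat)) := all goodB Bs && checkS (map spanN Bs).

Lemma pairwise_map_disj Bs : pairwise disjS (map spanN Bs) = pairwise disjN Bs.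
Proof. by elim: Bs => [|B Bs IH] //=; rewrite IH all_map. Qed.

Lemma checkPE Bs : checkP Bs = [&& all goodB Bs, pairwise disjN Bs &
      all (fun m => has (fun B => m \in spanN B) Bs) (iota 1 255)].
Proof.
rewrite /checkP /checkS pairwise_map_disj; congr [&& _, _ & _].
by apply: eq_all => m; rewrite has_map.
Qed.

Lemma pairwise_disj Bs : pairwise disjN Bs ->
  forall B1 B2, B1 \in Bs -> B2 \in Bs -> B1 != B2 ->
  forall m, m \in spanN B1 -> m \in spanN B2 -> m = 0%N.
Proof.
have key : forall B1 B2, disjN B1 B2 -> forall m, m \in spanN B1 -> m \in spanN B2 -> m = 0%N.
  move=> B1 B2 /allP H m H1 H2; move: (H m H1); rewrite H2 orbF.
  by move/eqP.
elim: Bs => [|B Bs IH] //; rewrite pairwise_cons => /andP[/allP HB HP] B1 B2.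
rewrite !inE => /orP[/eqP->|H1] /orP[/eqP->|H2] Hne m.
- by rewrite eqxx in Hne.
- exact: key (HB _ H2) m.
- by move=> Hm1 Hm2; exact: key (HB _ H1) m Hm2 Hm1.
- exact: IH.
Qed.

Lemma check_partition Bs : checkP Bs -> vs_partition (map vspan Bs).
Proof.
rewrite checkPE; case/and3P => /allP Hg HP /allP Hc.
have nz : forall B, B \in Bs -> exists2 m, m \in spanN B & m != 0%N.
  by move=> B /Hg /and3P[_ _ /hasP[m Hm Hm0]]; exists m.
have lt : forall B, B \in Bs -> all (fun m => m < 256)%N (spanN B).
  by move=> B /Hg /and3P[].
have inj : {in Bs &, injective vspan}.
  move=> B1 B2 H1 H2 E; apply/eqP; apply/negPn/negP => Hne.
  have [m Hm Hm0] := nz _ H1.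
  have Hm256 : (m < 256)%N by move/allP: (lt _ H1); apply.
  have : m \in spanN B2 by rewrite -mem_vspanN ?lt // -E mem_vspanN ?lt.
  by move/(pairwise_disj HP H1 H2 Hne Hm)/eqP; rewrite (negbTE Hm0).
split.
- rewrite map_inj_in_uniq //.
  elim: Bs HP Hg {Hc nz lt inj} => [|B Bs IH] //; rewrite pairwise_cons => /andP[/allP HB HP] Hg /=.
  rewrite IH //; last by move=> B' HB'; apply: Hg; rewrite inE HB' orbT.
  rewrite andbT; apply/negP => HBin.
  have /and3P[_ _ /hasP[m Hm Hm0]] := Hg B (mem_head _ _).
  by move/allP: (HB _ HBin) => /(_ m Hm); rewrite Hm orbF (negbTE Hm0).
- move=> U /mapP[B HB ->]; apply/negP => /eqP E0.
  have [m Hm Hm0] := nz _ HB.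
  have Hm256 : (m < 256)%N by move/allP: (lt _ HB); apply.
  have : vec m \in vspan B by rewrite mem_vspanN ?lt.
  by rewrite E0 memv0 vec_neq0 // (negbTE Hm0).
- move=> v Hv; have [m Hm Ev] := vec_surj v.
  have Hm0 : m != 0%N by rewrite -vec_neq0 // -Ev.
  split.
    have : m \in iota 1 255 by rewrite mem_iota; case: m Hm Hm0 {Ev} => //.
    case/Hc/hasP => B HB HmB; exists (vspan B); first exact: map_f.
    by rewrite Ev mem_vspanN ?lt.
  move=> U1 U2 /mapP[B1 H1 ->] /mapP[B2 H2 ->].
  rewrite Ev !mem_vspanN ?lt // => Hm1 Hm2.
  case: (eqVneq B1 B2) => [->//|Hne].
  by move: (pairwise_disj HP H1 H2 Hne Hm1 Hm2) Hm0 => ->.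
Qed.

Definition sumt (t : seq (nat * nat)) d := sumn [seq p.2 | p <- t & p.1 == d].

Lemma sumtE t d : (\sum_(p <- t | p.1 == d) p.2)%N = sumt t d.
Proof.
rewrite /sumt; elim: t => [|p t IH]; first by rewrite big_nil.
by rewrite big_cons /=; case: eqP => _ //=; rewrite IH.
Qed.

Definition typeOK (Bs : seq (seq nat)) (t : seq (nat * nat)) :=
  [&& all (fun B => size B < 9)%N Bs, all (fun p => p.1 < 9)%N t &
      all (fun d => count (fun B => size B == d) Bs == sumt t d) (iota 0 9)].

Lemma typeOK_has_type Bs t : all goodB Bs -> typeOK Bs t -> has_type (map vspan Bs) t.
Proof.
move=> /allP Hg /and3P[/allP Hs /allP Ht /allP Hd] d.
rewrite count_map sumtE.
rewrite (@eq_in_count _ _ (fun B => size B == d)); last first.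
  by move=> B HB /=; rewrite freeN_dim //; case/and3P: (Hg B HB).
case: (ltnP d 9) => Hd9; first by apply/eqP/Hd; rewrite mem_iota.
rewrite (@eq_in_count _ _ pred0); last first.
  move=> B HB /=; apply/negP => /eqP E; have := Hs B HB.
  by rewrite E ltnNge Hd9.
rewrite count_pred0 /sumt (@eq_in_filter _ _ pred0) ?filter_pred0 //.
move=> p Hp /=; apply/negP => /eqP E; have := Ht p Hp.
by rewrite E ltnNge Hd9.
Qed.

Lemma check_exists Bs t : checkP Bs && typeOK Bs t ->
  exists P : seq {vspace F2n 8}, vs_partition P /\ has_type P t.
Proof.
case/andP => Hc Ht; exists (map vspan Bs); split; first exact: check_partition.
by apply: typeOK_has_type => //; case/andP: Hc.
Qed.

Definition spread4 : seq (seq nat) := [:: [:: 1; 2; 4; 8]; [:: 17; 34; 68; 136]; [:: 25; 33; 66; 132]; [:: 30; 47; 77; 137]; [:: 29; 41; 65; 130]; [:: 27; 37; 74; 135]; [:: 23; 46; 79; 141]; [:: 22; 44; 75; 133]; [:: 31; 45; 73; 129]; [:: 18; 36; 72; 131]; [:: 28; 43; 69; 138]; [:: 21; 42; 71; 142]; [:: 26; 39; 78; 143]; [:: 20; 40; 67; 134]; [:: 19; 38; 76; 139]; [:: 24; 35; 70; 140]; [:: 16; 32; 64; 128]].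
Definition split4 : seq (seq (seq nat)) := [:: [:: [:: 1; 6]; [:: 2; 12]; [:: 3; 10]; [:: 4; 11]; [:: 5; 13]]; [:: [:: 17; 102]; [:: 34; 204]; [:: 51; 170]; [:: 68; 187]; [:: 85; 221]]; [:: [:: 25; 99]; [:: 33; 198]; [:: 56; 165]; [:: 66; 188]; [:: 91; 223]]; [:: [:: 30; 98]; [:: 47; 196]; [:: 49; 166]; [:: 77; 184]; [:: 83; 218]]; [:: [:: 29; 104]; [:: 41; 195]; [:: 52; 171]; [:: 65; 182]; [:: 92; 222]]; [:: [:: 27; 111]; [:: 37; 205]; [:: 62; 162]; [:: 74; 185]; [:: 81; 214]]; [:: [:: 23; 97]; [:: 46; 194]; [:: 57; 163]; [:: 79; 180]; [:: 88; 213]]; [:: [:: 22; 103]; [:: 44; 206]; [:: 58; 169]; [:: 75; 191]; [:: 93; 216]]; [:: [:: 31; 100]; [:: 45; 200]; [:: 50; 172]; [:: 73; 179]; [:: 86; 215]]; [:: [:: 18; 108]; [:: 36; 203]; [:: 54; 167]; [:: 72; 181]; [:: 90; 217]]; [:: [:: 28; 110]; [:: 43; 207]; [:: 55; 161]; [:: 69; 189]; [:: 89; 211]]; [:: [:: 21; 109]; [:: 42; 201]; [:: 63; 164]; [:: 71; 177]; [:: 82; 220]]; [:: [:: 26; 105]; [:: 39; 193]; [:: 61; 168]; [:: 78; 178]; [:: 84; 219]]; [:: [:: 20; 107]; [:: 40; 197]; [:: 60; 174]; [:: 67; 186]; [:: 87; 209]]; [:: [:: 19; 106]; [:: 38; 199];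 [:: 53; 173]; [:: 76; 190]; [:: 95; 212]]; [:: [:: 24; 101]; [:: 35; 202]; [:: 59; 175]; [:: 70; 183]; [:: 94; 210]]; [:: [:: 16; 96]; [:: 32; 192]; [:: 48; 160]; [:: 64; 176]; [:: 80; 208]]].
Definition part6 : seq (seq nat) := [:: [:: 1; 2; 4; 8; 16; 96]; [:: 32; 192]; [:: 33; 198]; [:: 34; 204]; [:: 35; 202]; [:: 36; 203]; [:: 37; 205]; [:: 38; 199]; [:: 39; 193]; [:: 40; 197]; [:: 41; 195]; [:: 42; 201]; [:: 43; 207]; [:: 44; 206]; [:: 45; 200]; [:: 46; 194]; [:: 47; 196]; [:: 48; 160]; [:: 49; 166]; [:: 50; 172]; [:: 51; 170]; [:: 52; 171]; [:: 53; 173]; [:: 54; 167]; [:: 55; 161]; [:: 56; 165]; [:: 57; 163]; [:: 58; 169]; [:: 59; 175]; [:: 60; 174]; [:: 61; 168]; [:: 62; 162]; [:: 63; 164]; [:: 64; 176]; [:: 65; 182]; [:: 66; 188]; [:: 67; 186]; [:: 68; 187]; [:: 69; 189]; [:: 70; 183]; [:: 71; 177]; [:: 72; 181]; [:: 73; 179]; [:: 74; 185]; [:: 75; 191]; [:: 76; 190]; [:: 77; 184]; [:: 78; 178]; [:: 79; 180]; [:: 80; 208]; [:: 81; 214]; [:: 82; 220]; [:: 83; 218]; [:: 84; 219]; [:: 85; 221]; [:: 86; 215]; [:: 87; 209]; [:: 88; 213]; [:: 89; 211]; [:: 90; 217]; [:: 91; 223]; [:: 92; 222]; [:: 93; 216];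 [:: 94; 210]; [:: 95; 212]].

Definition Bsi (i : nat) := flatten (take i split4) ++ drop i spread4.

Lemma ex8 : checkP [:: [:: 1; 2; 4; 8; 16; 32; 64; 128]]%N && typeOK [:: [:: 1; 2; 4; 8; 16; 32; 64; 128]]%N [:: (8, 1)]%N.
Proof. vm_compute. reflexivity. Qed.

Lemma ex6 : checkP part6 && typeOK part6 [:: (2, 64); (6, 1)]%N.
Proof. vm_compute. reflexivity. Qed.

Lemma exi_all : all (fun i => checkP (Bsi i) && typeOK (Bsi i) [:: (2, 5 * i); (4, 17 - i)]%N) (iota 0 18).
Proof. vm_compute. reflexivity. Qed.

Lemma card_F2 : #|'F_2| = 2%N.
Proof. by rewrite card_Fp. Qed.

Lemma count_identity (P : seq {vspace F2n 8}) : vs_partition P ->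
  (\sum_(U <- P) (2 ^ \dim U - 1) = 255)%N.
Proof.
case=> uP _ Hcov.
have E1 : forall U : {vspace F2n 8}, (2 ^ \dim U - 1 = \sum_(v : F2n 8) ((v != 0%R) && (v \in U) : nat))%N.
  move=> U; have -> : (2 ^ \dim U = #|U|)%N by rewrite (card_vspace U) card_F2.
  rewrite (cardD1 0) mem0v add1n subn1 /=.
  by rewrite -sum1_card big_mkcond /=; apply: eq_bigr => v _; rewrite !inE; case: (_ && _).
rewrite (eq_bigr _ (fun U _ => E1 U)) exchange_big /=.
rewrite (eq_bigr (fun v => (v != 0 : nat))); last first.
  move=> v _; case: (eqVneq v 0) => [->|Hv] /=; first by rewrite big1.
  have [[U0 HU0 HvU0] Huniq] := Hcov v Hv.
  transitivity (count (fun U : {vspace F2n 8} => v \in U) P).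
    rewrite -sum1_count [in RHS]big_mkcond /=; apply: eq_bigr => U _; by case: (v \in U).
  rewrite (@eq_in_count _ _ (pred1 U0)); last first.
    move=> U HU /=; apply/idP/eqP => [HvU|->//]; exact: Huniq.
  by rewrite count_uniq_mem // HU0.
rewrite -big_mkcond /= sum1_card cardC1 card_mx card_F2.
done.
Qed.

Lemma pair_dim (P : seq {vspace F2n 8}) U1 U2 : vs_partition P ->
  U1 \in P -> U2 \in P -> U1 != U2 -> (\dim U1 + \dim U2 <= 8)%N.
Proof.
case=> _ _ Hcov H1 H2 Hne.
have cap0 : (U1 :&: U2 = 0)%VS.
  apply/eqP; rewrite -subv0; apply/subvP => v /memv_capP[h1 h2]; rewrite memv0.
  apply/negPn/negP => hv; have [_ Hu] := Hcov v hv.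
  by move: Hne; rewrite (Hu U1 U2) ?eqxx.
rewrite -dimv_sum_cap cap0 dimv0 addn0.
have := dimvS (subvf (U1 + U2)%VS); rewrite dimvf.
done.
Qed.

From mathcomp Require Import zify.
Local Close Scope ring_scope.
Local Open Scope nat_scope.

Lemma dims_in (P : seq {vspace F2n 8}) : vs_partition P ->
  (forall U, U \in P -> ~~ odd (\dim U)) ->
  forall U, U \in P -> \dim U \in [:: 2; 4; 6; 8]%N.
Proof.
case=> _ Hnz _ Hev U HU.
have h1 : (0 < \dim U)%N by rewrite lt0n dimv_eq0 Hnz.
have h2 : (\dim U <= 8)%N by have := dimvS (subvf U); rewrite dimvf.
move: (Hev U HU) h1 h2; move: (\dim U) => d.
by do 9? (case: d => [|d] //).
Qed.

Lemma sum_counts (P : seq {vspace F2n 8}) :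
  (forall U, U \in P -> \dim U \in [:: 2; 4; 6; 8]%N) ->
  let c d := count (fun U : {vspace F2n 8} => \dim U == d) P in
  (\sum_(U <- P) (2 ^ \dim U - 1) = 3 * c 2 + 15 * c 4 + 63 * c 6 + 255 * c 8)%N.
Proof.
elim: P => [|U P IH] H /=; first by rewrite big_nil.
rewrite big_cons IH; last by move=> V HV; apply: H; rewrite inE HV orbT.
have := H U (mem_head _ _); rewrite !inE => /or4P[] /eqP -> /=; lia.
Qed.

Lemma two_of (T : eqType) (s : seq T) (a b : pred T) :
  (0 < count a s)%N -> (0 < count b s)%N -> (forall x, a x -> b x -> False) ->
  exists x y, [/\ x \in s, y \in s, a x, b y & x != y].
Proof.
rewrite -!has_count => /hasP[x Hx ax] /hasP[y Hy By] H.
exists x, y; split => //; apply/eqP => E; subst y; exact: H ax By.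
Qed.

Lemma two_same (T : eqType) (s : seq T) (a : pred T) : uniq s ->
  (1 < count a s)%N -> exists x y, [/\ x \in s, y \in s, a x, a y & x != y].
Proof.
move=> us; rewrite -size_filter.
have uf : uniq (filter a s) by rewrite filter_uniq.
have mf : forall z, z \in filter a s -> z \in s /\ a z by move=> z; rewrite mem_filter => /andP[].
case E: (filter a s) uf mf => [|x [|y t]] //= /andP[Hx _] mf _.
have [h1 h2] := mf x (mem_head _ _).
have [h3 h4] : y \in s /\ a y by apply: mf; rewrite !inE eqxx orbT.
exists x, y; split => //; apply/eqP => Exy; subst y.
by rewrite inE eqxx in Hx.
Qed.

Lemma has_typeI (P : seq {vspace F2n 8}) t :
  (forall U, U \in P -> \dim U \in [:: 2; 4; 6; 8]%N) ->
  (forall d, d \in [:: 2; 4; 6; 8]%N -> count (fun U : {vspace F2n 8} => \dim U == d) P = sumt t d) ->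
  (forall d, d \notin [:: 2; 4; 6; 8]%N -> sumt t d = 0%N) ->
  has_type P t.
Proof.
move=> Hd H1 H2 d; rewrite sumtE.
case: (boolP (d \in [:: 2; 4; 6; 8]%N)) => Hin; first exact: H1.
rewrite H2 // (@eq_in_count _ _ pred0) ?count_pred0 //.
move=> U HU /=; apply/negP => /eqP E; move: (Hd U HU); rewrite E.
by rewrite (negbTE Hin).
Qed.

Lemma classification (P : seq {vspace F2n 8}) :
     vs_partition P ->
     (forall U, U \in P -> ~~ odd (\dim U)) ->
     [\/ has_type P [:: (8, 1)],
         has_type P [:: (2, 64); (6, 1)] |
         exists2 i, (i <= 17)%N & has_type P [:: (2, 5 * i); (4, 17 - i)]%N].
Proof.
move=> Hp Hev.
have Hd := dims_in Hp Hev.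
have Hs := count_identity Hp; rewrite (sum_counts Hd) /= in Hs.
set c := fun d => count (fun U : {vspace F2n 8} => \dim U == d) P.
have Hpair : forall d1 d2, (8 < d1 + d2)%N -> d1 != d2 -> (0 < c d1)%N -> (0 < c d2)%N -> False.
  move=> d1 d2 Hlt Hne h1 h2.
  have [x [y [hx hy /eqP ax /eqP ay hxy]]] := two_of h1 h2 (a := fun U : {vspace F2n 8} => \dim U == d1) (b := fun U : {vspace F2n 8} => \dim U == d2)
     (fun x (ax : \dim x == d1) (bx : \dim x == d2) => ltac:(by move: Hne; rewrite -(eqP ax) -(eqP bx) eqxx)).
  by have := pair_dim Hp hx hy hxy; rewrite ax ay leqNgt Hlt.
have H66 : (c 6 <= 1)%N.
  rewrite leqNgt; apply/negP => h.
  have [x [y [hx hy /eqP ax /eqP ay hxy]]] := two_same (a := fun U : {vspace F2n 8} => \dim U == 6%N) (let: And3 u _ _ := Hp in u) h.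
  by have := pair_dim Hp hx hy hxy; rewrite ax ay.
have H64 : (0 < c 6)%N -> c 4 = 0%N.
  move=> h6; apply/eqP; rewrite -leqn0 leqNgt; apply/negP => h4.
  exact: (Hpair 6 4 isT isT h6 h4).
have Hrest : forall t, (forall d, d \in [:: 2; 4; 6; 8]%N -> c d = sumt t d) ->
   (forall d, d \notin [:: 2; 4; 6; 8]%N -> sumt t d = 0%N) -> has_type P t.
  by move=> t; apply: has_typeI.
rewrite -/(c 2) -/(c 4) -/(c 6) -/(c 8) in Hs.
case: (posnP (c 8)) => h8.
  case: (posnP (c 6)) => h6.
  - apply: Or33; exists (17 - c 4)%N; first exact: leq_subr.
    apply: Hrest.
      move=> d; rewrite !inE => /or4P[] /eqP -> /=; rewrite /sumt /=; lia.
    move=> d; rewrite !inE !negb_or => /and4P[] /negbTE a /negbTE b _ _.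
    by rewrite /sumt /= ![_ == d]eq_sym a b.
  - apply: Or32; have h4 := H64 h6.
    apply: Hrest.
      move=> d; rewrite !inE => /or4P[] /eqP -> /=; rewrite /sumt /=; lia.
    move=> d; rewrite !inE !negb_or => /and4P[] /negbTE a _ /negbTE b _.
    by rewrite /sumt /= ![_ == d]eq_sym a b.
- apply: Or31.
  apply: Hrest.
    move=> d; rewrite !inE => /or4P[] /eqP -> /=; rewrite /sumt /=; lia.
  move=> d; rewrite !inE !negb_or => /and4P[] _ _ _ /negbTE a.
  by rewrite /sumt /= ![_ == d]eq_sym a.
Qed.

Theorem mainTheorem10 :
  (forall P : seq {vspace F2n 8},
     vs_partition P ->
     (forall U, U \in P -> ~~ odd (\dim U)) ->
     [\/ has_type P [:: (8, 1)],
         has_type P [:: (2, 64); (6, 1)] |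
         exists2 i, (i <= 17)%N & has_type P [:: (2, 5 * i); (4, 17 - i)]%N])
  /\
  [/\ (exists P : seq {vspace F2n 8}, vs_partition P /\ has_type P [:: (8, 1)]),
      (exists P : seq {vspace F2n 8}, vs_partition P /\ has_type P [:: (2, 64); (6, 1)]) &
      (forall i, (i <= 17)%N ->
         exists P : seq {vspace F2n 8},
           vs_partition P /\ has_type P [:: (2, 5 * i); (4, 17 - i)]%N)].
Proof.
split; first exact: classification.
split.
- exact: check_exists ex8.
- exact: check_exists ex6.
- move=> i Hi; apply: (check_exists (Bs := Bsi i)).
  by apply: (allP exi_all i); rewrite mem_iota.
Qed.
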